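(* Let $A_2\subset[0,1]$ be a closed $\times2\bmod1$ invariant set with $\dim_{\mathrm H}A_2=s\in(0,1]$ and let $s'\in[0,s)$. Then for every $\varepsilon>0$ there exist $m\in\mathbb{N}$ and two closed $\times2^m\bmod1$ invariant sets $A_2',A_2''\subset[0,1]$ such that \[ A_2\subset A_2'+A_2''\pmod 1,\qquad |\dim_{\mathrm H}A_2'-s'|\le\varepsilon,\qquad \dim_{\mathrm H}A_2\ge\dim_{\mathrm H}A_2'+\dim_{\mathrm H}A_2''-\varepsilon . \]
   Context: A closed set $A\subset[0,1]$ is called $\times p\bmod 1$ invariant ($p\ge2$ an integer) if $\{pa\}\in A$ for every $a\in A$, where $\{x\}$ is the fractional part. $A_2\subset A_2'+A_2''\pmod1$ means every element of $A_2$ is congruent mod $1$ to $a'+a''$ for some $a'\in A_2'$, $a''\in A_2''$. *)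

(* Defs.v *)
From Stdlib Require Import Reals Rtopology R_Ifp.
Open Scope R_scope.

Definition in_unit_interval (A : R -> Prop) : Prop :=
  forall a, A a -> 0 <= a <= 1.

Definition times_p_invariant (p : nat) (A : R -> Prop) : Prop :=
  forall a, A a -> A (frac_part (INR p * a)).

Definition subset_sum_mod1 (A A' A'' : R -> Prop) : Prop :=
  forall a, A a -> exists a' a'' (k : Z), A' a' /\ A'' a'' /\ a = a' + a'' + IZR k.

(* The diameter of
   U_n is bounded by r_n (0 < r_n <= delta); taking r_n slightly larger than
   the diameter makes this equivalent to the usual definition of the
   s-dimensional Hausdorff measure vanishing. *)
Definition H_null (s : R) (E : R -> Prop) : Prop :=
  forall eps delta, 0 < eps -> 0 < delta ->
  exists (U : nat -> R -> Prop) (r : nat -> R),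
    (forall n, 0 < r n <= delta) /\
    (forall n x y, U n x -> U n y -> Rabs (x - y) <= r n) /\
    (forall x, E x -> exists n, U n x) /\
    (forall N, sum_f_R0 (fun n => Rpower (r n) s) N <= eps).

Definition is_hdim (E : R -> Prop) (d : R) : Prop :=
  (forall s, 0 <= s -> H_null s E -> d <= s) /\
  (forall t, (forall s, 0 <= s -> H_null s E -> t <= s) -> t <= d).

(* Main.v *)
Require Import Defs.
From Stdlib Require Import Reals Rtopology R_Ifp Lra Lia List ZArith.
From Stdlib Require Import ClassicalEpsilon Classical.
Import ListNotations.
Open Scope R_scope.

Lemma Ip_spec x : IZR (Int_part x) <= x < IZR (Int_part x) + 1.
Proof. destruct (base_Int_part x). lra. Qed.

Lemma Ip_unique x z : IZR z <= x < IZR z + 1 -> Int_part x = z.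
Proof. intros H. symmetry. apply Int_part_spec. lra. Qed.

Lemma Ip_plusZ x z : Int_part (x + IZR z) = (Int_part x + z)%Z.
Proof. apply Ip_unique. rewrite plus_IZR. pose proof (Ip_spec x). lra. Qed.

Lemma frac_bounds x : 0 <= frac_part x < 1.
Proof. unfold frac_part. pose proof (Ip_spec x). lra. Qed.

Lemma frac_plusZ x z : frac_part (x + IZR z) = frac_part x.
Proof. unfold frac_part. rewrite Ip_plusZ, plus_IZR. lra. Qed.

Lemma frac_mulZ (n : Z) y : frac_part (IZR n * frac_part y) = frac_part (IZR n * y).
Proof.
  replace (IZR n * y) with (IZR n * frac_part y + IZR (n * Int_part y)).
  - now rewrite frac_plusZ.
  - unfold frac_part. rewrite mult_IZR. ring.
Qed.

Lemma IZR_p2 n : IZR (2 ^ Z.of_nat n) = 2 ^ n.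
Proof. rewrite <- pow_IZR. reflexivity. Qed.

Lemma p2_pos n : 0 < 2 ^ n.
Proof. apply pow_lt. lra. Qed.

Lemma p2_ge1 n : 1 <= 2 ^ n.
Proof. apply pow_R1_Rle. lra. Qed.

Lemma window p r y :
  Int_part (2 ^ (p + r) * y) =
  (2 ^ Z.of_nat r * Int_part (2 ^ p * y) + Int_part (2 ^ r * frac_part (2 ^ p * y)))%Z.
Proof.
  replace (2 ^ (p + r) * y) with (2 ^ r * frac_part (2 ^ p * y) + IZR (2 ^ Z.of_nat r * Int_part (2 ^ p * y))).
  - rewrite Ip_plusZ. lia.
  - rewrite mult_IZR, IZR_p2, pow_add. unfold frac_part. ring.
Qed.

Lemma frac_window p r y :
  frac_part (2 ^ (p + r) * y) = frac_part (2 ^ r * frac_part (2 ^ p * y)).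
Proof.
  replace (2 ^ r * frac_part (2 ^ p * y)) with (IZR (2 ^ Z.of_nat r) * frac_part (2 ^ p * y))
    by (now rewrite IZR_p2).
  rewrite frac_mulZ, IZR_p2, <- Rmult_assoc, <- pow_add. f_equal. f_equal. f_equal. lia.
Qed.

Lemma Ip_range y n : 0 <= y <= 1 -> (0 <= Int_part (2 ^ n * y) <= 2 ^ Z.of_nat n)%Z.
Proof.
  intros Hy. pose proof (Ip_spec (2 ^ n * y)). pose proof (p2_pos n).
  assert (0 <= 2 ^ n * y <= 2 ^ n).
  { split. apply Rmult_le_pos; lra. rewrite <- (Rmult_1_r (2^n)) at 2. apply Rmult_le_compat_l; lra. }
  split.
  - assert (Hq : IZR (-1) < IZR (Int_part (2 ^ n * y))) by (simpl; lra). apply lt_IZR in Hq. lia.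
  - apply le_IZR. rewrite IZR_p2. lra.
Qed.

Lemma Ip_range_frac y n : (0 <= Int_part (2 ^ n * frac_part y) <= 2 ^ Z.of_nat n - 1)%Z.
Proof.
  pose proof (frac_bounds y). pose proof (Ip_spec (2 ^ n * frac_part y)). pose proof (p2_pos n).
  assert (0 <= 2 ^ n * frac_part y < 2 ^ n).
  { split. apply Rmult_le_pos; lra. rewrite <- (Rmult_1_r (2^n)) at 2. apply Rmult_lt_compat_l; lra. }
  split.
  - assert (Hq : IZR (-1) < IZR (Int_part (2 ^ n * frac_part y))) by (simpl; lra). apply lt_IZR in Hq. lia.
  - assert (Hq : IZR (Int_part (2 ^ n * frac_part y)) < IZR (2 ^ Z.of_nat n)) by (rewrite IZR_p2; lra).
    apply lt_IZR in Hq. lia.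
Qed.

Lemma frac_id y : 0 <= y < 1 -> frac_part y = y.
Proof. intros H. unfold frac_part. rewrite (Ip_unique y 0); [simpl; lra| simpl; lra]. Qed.

Lemma frac_one : frac_part 1 = 0.
Proof. unfold frac_part. rewrite (Ip_unique 1 1); simpl; lra. Qed.

Lemma inv_iter (A : R -> Prop) : in_unit_interval A -> times_p_invariant 2 A ->
  forall n y, A y -> A (frac_part (2 ^ n * y)).
Proof.
  intros HU HA n. induction n; intros y Hy.
  - simpl. rewrite Rmult_1_l. destruct (HU y Hy) as [H0 H1].
    destruct (Req_dec y 1) as [->|Hne].
    + rewrite frac_one. apply HA in Hy.
      replace (INR 2 * 1) with (0 + IZR 2) in Hy by (simpl; lra).
      rewrite frac_plusZ, fp_R0 in Hy. exact Hy.
    + rewrite frac_id; [exact Hy|lra].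
  - replace (2 ^ S n * y) with (IZR 2 * (2 ^ n * y)) by (simpl; ring).
    rewrite <- (frac_mulZ 2 (2 ^ n * y)). pose proof (HA _ (IHn y Hy)) as H2.
    replace (IZR 2) with (INR 2) by (simpl; lra). exact H2.
Qed.

Lemma Rabs_le_inv a b : Rabs a <= b -> - b <= a <= b.
Proof. unfold Rabs. destruct (Rcase_abs a); lra. Qed.

Lemma Rabs_lt_inv a b : Rabs a < b -> - b < a < b.
Proof. unfold Rabs. destruct (Rcase_abs a); lra. Qed.

Lemma exp_le_mono a b : a <= b -> exp a <= exp b.
Proof. intros [H|H]. left; now apply exp_increasing. right; now subst. Qed.

Lemma Rpower_pos x y : 0 < Rpower x y.
Proof. apply exp_pos. Qed.

Lemma ln_le0 r : 0 < r <= 1 -> ln r <= 0.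
Proof.
  intros [H0 [H1|H1]]. left. rewrite <- ln_1. now apply ln_increasing.
  subst. rewrite ln_1. lra.
Qed.

Lemma Rpower_le1_mono r a b : 0 < r <= 1 -> a <= b -> Rpower r b <= Rpower r a.
Proof.
  intros Hr Hab. unfold Rpower. apply exp_le_mono. pose proof (ln_le0 r Hr). nra.
Qed.

Lemma Rpower_root x s : 0 < x -> 0 < s -> Rpower (Rpower x (/ s)) s = x.
Proof. intros. rewrite Rpower_mult, Rinv_l by lra. now apply Rpower_1. Qed.

Lemma Rpower_powb x n s : 0 < x -> Rpower (x ^ n) s = (Rpower x s) ^ n.
Proof.
  intros Hx. rewrite <- (Rpower_pow n x Hx), Rpower_mult, <- Rpower_pow by apply Rpower_pos.
  rewrite Rpower_mult. f_equal. ring.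
Qed.

Lemma Rpower_base_mono a b c : 0 <= c -> 0 < a <= b -> Rpower a c <= Rpower b c.
Proof. apply Rle_Rpower_l. Qed.

Definition lsum (l : list R) : R := fold_right Rplus 0 l.

Lemma lsum_app l1 l2 : lsum (l1 ++ l2) = lsum l1 + lsum l2.
Proof. induction l1; simpl; [lra| rewrite IHl1; lra]. Qed.

Lemma lsum_flat_map {A B} (f : A -> list B) (g : B -> R) l :
  lsum (map g (flat_map f l)) = lsum (map (fun a => lsum (map g (f a))) l).
Proof. induction l; simpl; auto. rewrite map_app, lsum_app, IHl. reflexivity. Qed.

Lemma lsum_le {A} (f g : A -> R) l : (forall a, In a l -> f a <= g a) ->
  lsum (map f l) <= lsum (map g l).
Proof.
  induction l; simpl; intros H; [lra|].
  pose proof (H a (or_introl eq_refl)). pose proof (IHl (fun x Hx => H x (or_intror Hx))). lra.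
Qed.

Lemma lsum_const {A} (c : R) (l : list A) : lsum (map (fun _ => c) l) = INR (length l) * c.
Proof. induction l; simpl map; simpl lsum; [simpl; lra|]. rewrite IHl. simpl length. rewrite S_INR. lra. Qed.

Lemma lsum_nonneg {A} (f : A -> R) l : (forall a, In a l -> 0 <= f a) -> 0 <= lsum (map f l).
Proof.
  induction l; simpl; intros H; [lra|].
  pose proof (H a (or_introl eq_refl)). pose proof (IHl (fun x Hx => H x (or_intror Hx))). lra.
Qed.

Lemma lsum_scal {A} (c : R) (f : A -> R) l : lsum (map (fun a => c * f a) l) = c * lsum (map f l).
Proof. induction l; simpl; [ring|]. rewrite IHl. ring. Qed.

Lemma lsum_seq (g : nat -> R) N : lsum (map g (seq 0 (S N))) = sum_f_R0 g N.
Proof.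
  induction N; [simpl; ring|].
  rewrite seq_S, map_app, lsum_app, IHN. simpl. ring.
Qed.

Lemma sum_nth_le {A} (l : list A) (f : A -> R) N : (forall a, In a l -> 0 <= f a) ->
  sum_f_R0 (fun n => match nth_error l n with Some p => f p | None => 0 end) N <= lsum (map f l).
Proof.
  revert N; induction l; intros N H.
  - rewrite (sum_eq _ (fun _ => 0)) by (intros i _; destruct i; reflexivity).
    rewrite sum_cte. simpl. lra.
  - destruct N.
    + simpl. pose proof (lsum_nonneg f l (fun x Hx => H x (or_intror Hx))). lra.
    + rewrite decomp_sum by lia. simpl. simpl pred.
      pose proof (IHl N (fun x Hx => H x (or_intror Hx))). lra.
Qed.

Lemma geom_half N : sum_f_R0 (fun n => (/2) ^ (S n)) N = 1 - (/2) ^ (S N).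
Proof. induction N; [simpl; lra|]. rewrite tech5, IHN. simpl. lra. Qed.

Definition FH (s : R) (E : R -> Prop) : Prop :=
  forall eta delta, 0 < eta -> 0 < delta ->
  exists l : list (R * R),
    (forall p, In p l -> 0 < snd p - fst p <= delta) /\
    (forall x, E x -> exists p, In p l /\ fst p <= x <= snd p) /\
    lsum (map (fun p => Rpower (snd p - fst p) s) l) <= eta.

Lemma FH_H s E : 0 < s -> FH s E -> H_null s E.
Proof.
  intros Hs HF eps delta He Hd.
  destruct (HF (eps/2) delta ltac:(lra) Hd) as [l [Hl1 [Hl2 Hl3]]].
  set (tiny n := Rmin delta (Rpower (eps/2 * (/2) ^ (S n)) (/ s))).
  exists (fun n y => match nth_error l n with Some p => fst p <= y <= snd p | None => False end).
  exists (fun n => match nth_error l n with Some p => snd p - fst p | None => tiny n end).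
  split; [|split; [|split]].
  - intros n. destruct (nth_error l n) eqn:E1.
    + apply Hl1. eapply nth_error_In; eauto.
    + unfold tiny. split. apply Rmin_pos; [lra| apply Rpower_pos]. apply Rmin_l.
  - intros n x y. destruct (nth_error l n) eqn:E1; [|tauto].
    intros. apply Rabs_le. lra.
  - intros x Hx. destruct (Hl2 x Hx) as [p [Hp1 Hp2]].
    destruct (In_nth_error l p Hp1) as [n Hn]. exists n. now rewrite Hn.
  - intros N.
    assert (Hb : forall n, Rpower (match nth_error l n with Some p => snd p - fst p | None => tiny n end) s
       <= (match nth_error l n with Some p => Rpower (snd p - fst p) s | None => 0 end) + eps/2 * (/2) ^ (S n)).
    { intros n. assert (0 < eps/2 * (/2) ^ S n) by (apply Rmult_lt_0_compat; [lra| apply pow_lt; lra]).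
      destruct (nth_error l n) eqn:E1. lra.
      unfold tiny. rewrite Rplus_0_l.
      rewrite <- (Rpower_root (eps/2 * (/2) ^ S n) s) at 2 by lra.
      apply Rpower_base_mono. lra. split. apply Rmin_pos; [lra| apply Rpower_pos]. apply Rmin_r. }
    eapply Rle_trans. apply sum_Rle. intros n _. apply Hb.
    rewrite sum_plus.
    pose proof (sum_nth_le l (fun p => Rpower (snd p - fst p) s) N (fun _ _ => Rlt_le _ _ (Rpower_pos _ _))).
    assert (Hg : sum_f_R0 (fun n => eps/2 * (/2) ^ S n) N = eps/2 * (1 - (/2) ^ S N)).
    { rewrite <- geom_half, scal_sum. apply sum_eq. intros; ring. }
    rewrite Hg.
    assert (0 < (/2) ^ S N) by (apply pow_lt; lra). nra.
Qed.

Lemma fold_max_ge (l : list nat) x : In x l -> (x <= fold_right max 0 l)%nat.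
Proof. induction l; simpl; [tauto|]. intros [->|H]; [lia|]. apply IHl in H. lia. Qed.

Lemma H_FH s E : compact E -> 0 <= s -> H_null s E -> FH s E.
Proof.
  intros HC Hs HH eta delta He Hd.
  assert (H4 : 0 < Rpower 4 s) by apply Rpower_pos.
  destruct (HH (eta / Rpower 4 s) (delta / 4)) as [U [r [Hr [Hdiam [Hcov Hsum]]]]].
  { apply Rdiv_lt_0_compat; lra. } { lra. }
  assert (Hc : forall n, exists c, forall z, U n z -> Rabs (z - c) <= r n).
  { intros n. destruct (classic (exists z, U n z)) as [[z0 Hz0]|Hno].
    - exists z0. intros z Hz. apply Hdiam; auto.
    - exists 0. intros z Hz. exfalso. apply Hno. eauto. }
  pose (c := fun n => proj1_sig (constructive_indefinite_description _ (Hc n))).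
  assert (Hcs : forall n z, U n z -> Rabs (z - c n) <= r n).
  { intros n. unfold c. destruct (constructive_indefinite_description _ (Hc n)) as [cc Hcc]. exact Hcc. }
  pose (ff := fun x y => exists n : nat, x = INR n /\ exists z, U n z /\ Rabs (y - z) < r n).
  assert (Hcf : forall x, (exists y, ff x y) -> (fun x => exists n : nat, x = INR n) x).
  { intros x [y [n [Hn _]]]. eauto. }
  pose (fam := mkfamily (fun x => exists n : nat, x = INR n) ff Hcf).
  destruct (HC fam) as [D [HDc HDf]].
  { split.
    - intros y Hy. destruct (Hcov y Hy) as [n Hn]. exists (INR n). simpl. unfold ff.
      exists n. split; auto. exists y. split; auto. rewrite Rminus_diag, Rabs_R0. apply Hr.
    - intros x y [n [Hxn [z [Hz Hyz]]]].
      assert (Hp : 0 < r n - Rabs (y - z)) by lra.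
      exists (mkposreal _ Hp). intros y' Hy'. unfold disc in Hy'. simpl in Hy'.
      exists n. split; auto. exists z. split; auto.
      pose proof (Rabs_triang (y' - y) (y - z)). replace (y' - y + (y - z)) with (y' - z) in H by ring.
      lra. }
  destruct HDf as [l Hl].
  pose (nof := fun x => Z.to_nat (Int_part x)).
  set (N := fold_right max 0%nat (map nof l)).
  exists (map (fun n => (c n - 2 * r n, c n + 2 * r n)) (seq 0 (S N))).
  split; [|split].
  - intros p Hp. apply in_map_iff in Hp. destruct Hp as [n [<- _]]. simpl.
    pose proof (Hr n). lra.
  - intros y Hy. destruct (HDc y Hy) as [x [Hf HDx]].
    destruct Hf as [n [Hxn [z [Hz Hyz]]]].
    assert (Hin : In x l).
    { apply Hl. simpl. split; [|exact HDx]. exists n; auto. }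
    assert (Hnof : nof x = n).
    { unfold nof. rewrite Hxn, Int_part_INR. apply Nat2Z.id. }
    exists (c n - 2 * r n, c n + 2 * r n). split.
    + apply in_map_iff. exists n. split; [reflexivity|]. apply in_seq. split; [lia|].
      assert (n <= N)%nat. { unfold N. rewrite <- Hnof. apply fold_max_ge. now apply in_map. }
      lia.
    + simpl. pose proof (Hcs n z Hz). pose proof (Hr n).
      apply Rabs_lt_inv in Hyz. apply Rabs_le_inv in H. lra.
  - rewrite map_map.
    eapply Rle_trans with (lsum (map (fun n => Rpower 4 s * Rpower (r n) s) (seq 0 (S N)))).
    + right. f_equal. apply map_ext. intros n. simpl.
      replace (c n + 2 * r n - (c n - 2 * r n)) with (4 * r n) by ring.
      rewrite Rpower_mult_distr; [reflexivity| lra | apply Hr].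
    + rewrite lsum_scal, lsum_seq.
      pose proof (Hsum N).
      apply Rmult_le_compat_l with (r := Rpower 4 s) in H; [|lra].
      replace (Rpower 4 s * (eta / Rpower 4 s)) with eta in H by (field; lra). exact H.
Qed.

Lemma H_mono s s' E : H_null s E -> s <= s' -> H_null s' E.
Proof.
  intros HH Hss eps delta He Hd.
  destruct (HH eps (Rmin delta 1) He (Rmin_pos _ _ Hd Rlt_0_1)) as [U [r [Hr [H1 [H2 H3]]]]].
  exists U, r. split; [|split; [|split]]; auto.
  - intros n. pose proof (Hr n). pose proof (Rmin_l delta 1). lra.
  - intros N. eapply Rle_trans; [|apply (H3 N)]. apply sum_Rle. intros n _.
    apply Rpower_le1_mono; auto. pose proof (Hr n). pose proof (Rmin_r delta 1). lra.
Qed.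

Lemma hdim_exists E : (exists s, 0 <= s /\ H_null s E) -> exists d, is_hdim E d.
Proof.
  intros [s0 [Hs0 HH]].
  set (S := fun x => exists s, x = - s /\ 0 <= s /\ H_null s E).
  destruct (completeness S) as [m [Hub Hlub]].
  - exists 0. intros x [s [-> [Hs _]]]. lra.
  - exists (- s0). exists s0. auto.
  - exists (- m). split.
    + intros s Hs HHs. assert (- s <= m) by (apply Hub; exists s; auto). lra.
    + intros t Ht. assert (m <= - t).
      { apply Hlub. intros x [s [-> [Hs HHs]]]. pose proof (Ht s Hs HHs). lra. }
      lra.
Qed.

Lemma hdim_H E d t : is_hdim E d -> d < t -> H_null t E.
Proof.
  intros [H1 H2] Hdt. apply NNPP. intros Hn.
  assert (t <= d); [|lra]. apply H2. intros s Hs HHs.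
  destruct (Rle_or_lt t s) as [h|h]; auto. exfalso. apply Hn. eapply H_mono; eauto. lra.
Qed.

Lemma hdim_upper E d s0 : is_hdim E d -> 0 <= s0 -> (forall s, s0 < s -> H_null s E) -> d <= s0.
Proof.
  intros [H1 H2] Hs0 H. destruct (Rle_or_lt d s0) as [h|h]; auto.
  assert (d <= (d + s0)/2). { apply H1. lra. apply H. lra. } lra.
Qed.

Definition val (m : nat) (w : list Z) : R := fold_right (fun x acc => (IZR x + acc) / 2 ^ m) 0 w.

Definition inL (L w : list Z) : Prop := forall x, In x w -> In x L.

Definition Kset (m : nat) (L : list Z) (y : R) : Prop :=
  0 <= y <= 1 /\ forall n, exists w, length w = n /\ inL L w /\ val m w <= y <= val m w + (/ 2 ^ m) ^ n.

Definition rng (m : nat) (L : list Z) : Prop := forall x, In x L -> (0 <= x <= 2 ^ Z.of_nat m - 1)%Z.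

Fixpoint words (L : list Z) (n : nat) : list (list Z) :=
  match n with
  | O => [[]]
  | S n => flat_map (fun w => map (fun x => x :: w) L) (words L n)
  end.

Lemma words_in L n w : length w = n -> inL L w -> In w (words L n).
Proof.
  revert w; induction n; intros w Hl Hw.
  - destruct w; [left; auto | discriminate].
  - destruct w as [|x w]; [discriminate|]. simpl. apply in_flat_map.
    exists w. split.
    + apply IHn. simpl in Hl; lia. intros y Hy. apply Hw. now right.
    + apply in_map_iff. exists x. split; auto. apply Hw. now left.
Qed.

Lemma words_prop L n w : In w (words L n) -> length w = n /\ inL L w.
Proof.
  revert w; induction n; intros w Hw.
  - simpl in Hw. destruct Hw as [<-|[]]. split; auto. intros x [].
  - simpl in Hw. apply in_flat_map in Hw. destruct Hw as [w' [Hw' Hx]].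
    apply in_map_iff in Hx. destruct Hx as [x [<- Hx]].
    destruct (IHn w' Hw') as [H1 H2]. split. simpl; lia.
    intros y [<-|Hy]; auto.
Qed.

Lemma length_flat_map {A B} (f : A -> list B) l :
  length (flat_map f l) = fold_right (fun a acc => length (f a) + acc)%nat 0%nat l.
Proof. induction l; simpl; auto. rewrite length_app, IHl. reflexivity. Qed.

Lemma words_len L n : length (words L n) = (length L ^ n)%nat.
Proof.
  induction n; simpl; auto. rewrite length_flat_map.
  rewrite <- IHn. clear IHn. induction (words L n); simpl; auto.
  rewrite length_map, IHl. lia.
Qed.

Lemma q_pos m : 0 < / 2 ^ m.
Proof. apply Rinv_0_lt_compat, p2_pos. Qed.

Lemma qn_pos m n : 0 < (/ 2 ^ m) ^ n.
Proof. apply pow_lt, q_pos. Qed.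

Lemma val_cons m x w : val m (x :: w) = (IZR x + val m w) / 2 ^ m.
Proof. reflexivity. Qed.

Lemma val_app m w1 w2 : val m (w1 ++ w2) = val m w1 + (/ 2 ^ m) ^ length w1 * val m w2.
Proof.
  induction w1; simpl app; simpl length.
  - simpl. ring.
  - rewrite !val_cons, IHw1. simpl. pose proof (p2_pos m). field. lra.
Qed.

Lemma val_bounds m L w : rng m L -> inL L w -> 0 <= val m w /\ val m w + (/ 2 ^ m) ^ length w <= 1.
Proof.
  intros HR. induction w; intros Hw.
  - simpl. lra.
  - rewrite val_cons. simpl length.
    destruct IHw as [H1 H2]. { intros y Hy; apply Hw; now right. }
    pose proof (HR a (Hw a (or_introl eq_refl))) as Ha.
    assert (Hx0 : 0 <= IZR a) by (apply IZR_le; lia).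
    assert (Hx1 : IZR a <= 2 ^ m - 1).
    { rewrite <- IZR_p2. replace 1 with (IZR 1) by reflexivity. rewrite <- minus_IZR. apply IZR_le. lia. }
    pose proof (p2_pos m) as HP. simpl pow.
    split.
    + apply Rmult_le_pos; [lra| left; apply Rinv_0_lt_compat; lra].
    + replace ((IZR a + val m w) / 2 ^ m + / 2 ^ m * (/ 2 ^ m) ^ length w)
        with ((IZR a + (val m w + (/ 2 ^ m) ^ length w)) / 2 ^ m) by (field; lra).
      apply Rmult_le_reg_r with (2 ^ m); [lra|]. unfold Rdiv. rewrite Rmult_assoc, Rinv_l by lra. lra.
Qed.

Lemma val_zeros m k : val m (repeat 0%Z k) = 0.
Proof. induction k; simpl; auto. rewrite IHk. lra. Qed.

Lemma K_val m L w : rng m L -> In 0%Z L -> inL L w -> Kset m L (val m w).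
Proof.
  intros HR H0 Hw. destruct (val_bounds m L w HR Hw) as [B1 B2].
  pose proof (qn_pos m (length w)). split; [lra|].
  intros n. destruct (Nat.le_gt_cases n (length w)) as [Hn|Hn].
  - exists (firstn n w). split; [|split].
    + rewrite length_firstn. lia.
    + intros y Hy. apply Hw. rewrite <- (firstn_skipn n w). apply in_or_app. now left.
    + assert (Hv : val m w = val m (firstn n w) + (/ 2 ^ m) ^ n * val m (skipn n w)).
      { pose proof (val_app m (firstn n w) (skipn n w)) as Hva. rewrite firstn_skipn in Hva.
        rewrite length_firstn in Hva. replace (Init.Nat.min n (length w)) with n in Hva by lia. exact Hva. }
      rewrite Hv in *.
      assert (Hs : inL L (skipn n w)).
      { intros y Hy. apply Hw. rewrite <- (firstn_skipn n w). apply in_or_app. now right. }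
      destruct (val_bounds m L _ HR Hs) as [C1 C2].
      pose proof (qn_pos m (length (skipn n w))). pose proof (qn_pos m n).
      split. nra.
      assert (val m (skipn n w) <= 1) by lra. nra.
  - exists (w ++ repeat 0%Z (n - length w)). split; [|split].
    + rewrite length_app, repeat_length. lia.
    + intros y Hy. apply in_app_or in Hy. destruct Hy as [Hy|Hy]; auto.
      apply repeat_spec in Hy. now subst.
    + rewrite val_app, val_zeros. pose proof (qn_pos m n). lra.
Qed.

Lemma K_zero m L : rng m L -> In 0%Z L -> Kset m L 0.
Proof. intros HR H0. apply (K_val m L [] HR H0). intros x []. Qed.

Lemma K_unit m L : in_unit_interval (Kset m L).
Proof. intros a [H _]. exact H. Qed.

Lemma K_FH m L s : (1 <= m)%nat -> 0 < s -> INR (length L) * Rpower (/ 2 ^ m) s < 1 ->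
  FH s (Kset m L).
Proof.
  intros Hm Hs Hrho eta delta He Hd.
  set (rho := INR (length L) * Rpower (/ 2 ^ m) s) in *.
  assert (Hr0 : 0 <= rho) by (apply Rmult_le_pos; [apply pos_INR| left; apply Rpower_pos]).
  assert (Hq1 : / 2 ^ m < 1).
  { rewrite <- Rinv_1. apply Rinv_lt_contravar. rewrite Rmult_1_l; apply p2_pos.
    destruct m; [lia|]. simpl. pose proof (p2_ge1 m). lra. }
  pose proof (q_pos m) as Hq0.
  destruct (pow_lt_1_zero rho ltac:(rewrite Rabs_right; lra) eta He) as [N1 HN1].
  destruct (pow_lt_1_zero (/ 2 ^ m) ltac:(rewrite Rabs_right; lra) delta Hd) as [N2 HN2].
  set (n := Nat.max N1 N2).
  specialize (HN1 n ltac:(lia)). specialize (HN2 n ltac:(lia)).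
  rewrite Rabs_right in HN1 by (apply Rle_ge, pow_le; lra).
  rewrite Rabs_right in HN2 by (apply Rle_ge, pow_le; lra).
  exists (map (fun w => (val m w, val m w + (/ 2 ^ m) ^ n)) (words L n)).
  split; [|split].
  - intros p Hp. apply in_map_iff in Hp. destruct Hp as [w [<- _]]. simpl.
    pose proof (qn_pos m n). lra.
  - intros y [_ Hy]. destruct (Hy n) as [w [H1 [H2 H3]]].
    exists (val m w, val m w + (/ 2 ^ m) ^ n). split; [|exact H3].
    apply in_map_iff. exists w. split; auto. now apply words_in.
  - rewrite map_map.
    rewrite (map_ext _ (fun _ => Rpower ((/ 2 ^ m) ^ n) s)) by (intros; simpl; f_equal; ring).
    rewrite lsum_const, words_len, pow_INR, Rpower_powb by lra.
    rewrite <- Rpow_mult_distr. fold rho. lra.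
Qed.

Lemma avoid_intervals (l : list (R * R)) x :
  (forall p, In p l -> ~ (fst p <= x <= snd p)) ->
  exists d, 0 < d /\ forall y, Rabs (y - x) < d -> forall p, In p l -> ~ (fst p <= y <= snd p).
Proof.
  induction l as [|p l IH]; intros H.
  - exists 1. split; [lra|]. intros y _ p [].
  - destruct IH as [d [Hd Hy]]. { intros p' Hp'. apply H. now right. }
    assert (Hp : ~ (fst p <= x <= snd p)) by (apply H; now left).
    assert (Hc : x < fst p \/ snd p < x) by lra.
    assert (He : exists e, 0 < e /\ forall y, Rabs (y - x) < e -> ~ (fst p <= y <= snd p)).
    { destruct Hc.
      - exists (fst p - x). split; [lra|]. intros y Hy1. apply Rabs_lt_inv in Hy1. lra.
      - exists (x - snd p). split; [lra|]. intros y Hy1. apply Rabs_lt_inv in Hy1. lra. }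
    destruct He as [e [He He2]].
    exists (Rmin d e). split. apply Rmin_pos; lra.
    intros y Hyx p' [<-|Hp'].
    + apply He2. pose proof (Rmin_r d e). lra.
    + apply Hy; auto. pose proof (Rmin_l d e). lra.
Qed.

Lemma K_closed m L : closed_set (Kset m L).
Proof.
  unfold closed_set, open_set, complementary. intros x Hx.
  destruct (Rlt_or_le x 0) as [Hx0|Hx0].
  { exists (mkposreal (- x) ltac:(lra)). intros y Hy [[Hy0 _] _]. unfold disc in Hy. simpl in Hy.
    apply Rabs_lt_inv in Hy. lra. }
  destruct (Rlt_or_le 1 x) as [Hx1|Hx1].
  { exists (mkposreal (x - 1) ltac:(lra)). intros y Hy [[_ Hy1] _]. unfold disc in Hy. simpl in Hy.
    apply Rabs_lt_inv in Hy. lra. }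
  assert (Hn : exists n, forall w, length w = n -> inL L w -> ~ (val m w <= x <= val m w + (/ 2 ^ m) ^ n)).
  { apply NNPP. intros Hne. apply Hx. split; [lra|]. intros n.
    apply NNPP. intros Hnw. apply Hne. exists n. intros w H1 H2 H3. apply Hnw. eauto. }
  destruct Hn as [n Hn].
  destruct (avoid_intervals (map (fun w => (val m w, val m w + (/ 2 ^ m) ^ n)) (words L n)) x) as [d [Hd Hy]].
  { intros p Hp. apply in_map_iff in Hp. destruct Hp as [w [<- Hw]]. simpl.
    destruct (words_prop L n w Hw). now apply Hn. }
  exists (mkposreal d Hd). intros y Hyd [_ Hy2]. unfold disc in Hyd. simpl in Hyd.
  destruct (Hy2 n) as [w [H1 [H2 H3]]].
  apply (Hy y Hyd (val m w, val m w + (/ 2 ^ m) ^ n)); [|exact H3].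
  apply in_map_iff. exists w. split; auto. now apply words_in.
Qed.

Lemma frac_IZR z : frac_part (IZR z) = 0.
Proof. replace (IZR z) with (0 + IZR z) by ring. rewrite frac_plusZ. apply fp_R0. Qed.

Lemma INR_p2 m : INR (2 ^ m) = 2 ^ m.
Proof. rewrite pow_INR. reflexivity. Qed.

Lemma K_inv m L : rng m L -> In 0%Z L -> times_p_invariant (2 ^ m) (Kset m L).
Proof.
  intros HR H0 y [Hy01 Hy]. rewrite INR_p2.
  pose proof (p2_pos m) as HP.
  split. { pose proof (frac_bounds (2 ^ m * y)). lra. }
  intros n. destruct (Hy (S n)) as [w [H1 [H2 H3]]].
  destruct w as [|x w]; [discriminate|]. simpl in H1. injection H1 as H1.
  rewrite val_cons in H3.
  assert (Hw : inL L w) by (intros z Hz; apply H2; now right).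
  destruct (val_bounds m L w HR Hw) as [B1 B2]. rewrite H1 in B2.
  assert (Hv : val m w <= 2 ^ m * y - IZR x <= val m w + (/ 2 ^ m) ^ n).
  { simpl pow in H3. destruct H3 as [H3a H3b].
    split.
    - apply Rmult_le_compat_l with (r := 2 ^ m) in H3a; [|lra].
      replace (2 ^ m * ((IZR x + val m w) / 2 ^ m)) with (IZR x + val m w) in H3a by (field; lra). lra.
    - apply Rmult_le_compat_l with (r := 2 ^ m) in H3b; [|lra].
      replace (2 ^ m * ((IZR x + val m w) / 2 ^ m + / 2 ^ m * (/ 2 ^ m) ^ n))
        with (IZR x + (val m w + (/ 2 ^ m) ^ n)) in H3b by (field; lra). lra. }
  destruct (Rlt_or_le (2 ^ m * y - IZR x) 1) as [Hlt|Hge].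
  - exists w. split; [auto|split; [auto|]].
    unfold frac_part. rewrite (Ip_unique (2 ^ m * y) x) by lra. lra.
  - assert (Heq : 2 ^ m * y = IZR (x + 1)) by (rewrite plus_IZR; simpl; lra).
    rewrite Heq, frac_IZR. exists (repeat 0%Z n). split; [apply repeat_length|split].
    + intros z Hz. apply repeat_spec in Hz. now subst.
    + rewrite val_zeros. pose proof (qn_pos m n). lra.
Qed.

Lemma choose_level q l : 0 < q < 1 -> 0 < l <= 1 -> exists n, l <= q ^ n /\ q ^ (S n) < l.
Proof.
  intros Hq Hl.
  destruct (pow_lt_1_zero q ltac:(rewrite Rabs_right; lra) l ltac:(lra)) as [N HN].
  specialize (HN N (le_n N)). rewrite Rabs_right in HN by (apply Rle_ge, pow_le; lra).
  clear -Hq Hl HN. induction N.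
  - simpl in HN. lra.
  - destruct (Rlt_or_le (q ^ N) l) as [h|h].
    + now apply IHN.
    + exists N. split; auto.
Qed.

Lemma Rpower_negb_anti x y b : 0 <= b -> 0 < x <= y -> Rpower y (- b) <= Rpower x (- b).
Proof.
  intros Hb Hxy. rewrite !Rpower_Ropp. apply Rinv_le_contravar. apply Rpower_pos.
  now apply Rle_Rpower_l.
Qed.

Lemma q_lt1 m : (1 <= m)%nat -> / 2 ^ m < 1.
Proof.
  intros Hm. rewrite <- Rinv_1. apply Rinv_lt_contravar. rewrite Rmult_1_l; apply p2_pos.
  destruct m; [lia|]. simpl. pose proof (p2_ge1 m). lra.
Qed.

Definition zs : list Z := [(-2)%Z; (-1)%Z; 0%Z; 1%Z].

Lemma in_zs z : (-2 <= z <= 1)%Z -> In z zs.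
Proof. intros H. unfold zs. simpl. lia. Qed.

Section Sum.
Variables (m : nat) (L : list Z) (s b : R).
Hypotheses (Hm : (1 <= m)%nat) (Hs : 0 <= s) (Hb : 0 <= b)
  (HL : INR (length L) <= Rpower (/ 2 ^ m) (- b)).

Let q := / 2 ^ m.
Let Cst := 4 * Rpower q (- b) * Rpower 2 (s + b).

Lemma one_piece (p : R * R) delta : 0 < snd p - fst p <= Rmin (delta / 2) 1 ->
  exists l : list (R * R),
    (forall p', In p' l -> 0 < snd p' - fst p' <= delta) /\
    (forall a' a'' z, fst p <= a' <= snd p -> Kset m L a'' -> (-2 <= z <= 1)%Z ->
        exists p', In p' l /\ fst p' <= a' + a'' + IZR z <= snd p') /\
    lsum (map (fun p' => Rpower (snd p' - fst p') (s + b)) l) <= Cst * Rpower (snd p - fst p) s.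
Proof.
  destruct p as [al be]. simpl. intros Hl.
  set (ell := be - al) in *.
  pose proof (Rmin_l (delta/2) 1). pose proof (Rmin_r (delta/2) 1).
  assert (Hq : 0 < q < 1) by (split; [apply q_pos| apply q_lt1; auto]).
  destruct (choose_level q ell Hq ltac:(lra)) as [n0 [Hn1 Hn2]].
  set (n := S n0).
  assert (Hn3 : q ^ n < ell) by exact Hn2.
  assert (Hqn : q * ell <= q ^ n) by (unfold n; simpl; apply Rmult_le_compat_l; lra).
  assert (Hqn0 : 0 < q ^ n) by (apply pow_lt; lra).
  exists (flat_map (fun z => map (fun w => (al + val m w + IZR z, be + val m w + q ^ n + IZR z)) (words L n)) zs).
  split; [|split].
  - intros p' Hp'. apply in_flat_map in Hp'. destruct Hp' as [z [_ Hp']].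
    apply in_map_iff in Hp'. destruct Hp' as [w [<- _]]. cbn [fst snd]. unfold ell in *. lra.
  - intros a' a'' z Ha' [_ Ha''] Hz. destruct (Ha'' n) as [w [H1 [H2 H3]]].
    exists (al + val m w + IZR z, be + val m w + q ^ n + IZR z). split.
    + apply in_flat_map. exists z. split; [now apply in_zs|].
      apply in_map_iff. exists w. split; auto. now apply words_in.
    + cbn [fst snd]. unfold q in *. lra.
  - rewrite lsum_flat_map.
    set (T := Rpower 2 (s + b) * Rpower ell (s + b)).
    assert (HT : forall w z, Rpower (be + val m w + q ^ n + IZR z - (al + val m w + IZR z)) (s + b) <= T).
    { intros w z. unfold T. rewrite Rpower_mult_distr by lra.
      replace (be + val m w + q ^ n + IZR z - (al + val m w + IZR z)) with (ell + q ^ n) by (unfold ell; ring).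
      apply Rle_Rpower_l. lra. split; lra. }
    eapply Rle_trans with (lsum (map (fun _ => INR (length (words L n)) * T) zs)).
    { apply lsum_le. intros z _. rewrite map_map. rewrite <- lsum_const.
      apply lsum_le. intros w _. cbn [fst snd]. apply HT. }
    rewrite lsum_const, words_len, pow_INR.
    replace (length zs) with 4%nat by reflexivity.
    assert (HLn : INR (length L) ^ n <= Rpower q (- b) * Rpower ell (- b)).
    { apply Rle_trans with (Rpower q (- b) ^ n).
      { apply pow_incr. split; [apply pos_INR| exact HL]. }
      rewrite <- Rpower_powb by lra. rewrite Rpower_mult_distr by lra.
      apply Rpower_negb_anti; auto. split; [|exact Hqn]. apply Rmult_lt_0_compat; lra. }
    unfold Cst, T. replace (INR 4) with 4 by (simpl; lra).
    replace (Rpower ell s) with (Rpower ell (- b) * Rpower ell (s + b)).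
    2:{ rewrite <- Rpower_plus. f_equal. ring. }
    pose proof (Rpower_pos 2 (s+b)). pose proof (Rpower_pos ell (s+b)).
    pose proof (Rpower_pos q (-b)). pose proof (Rpower_pos ell (-b)).
    match goal with |- _ <= ?R => replace R with (4 * ((Rpower q (- b) * Rpower ell (- b)) * (Rpower 2 (s + b) * Rpower ell (s + b)))) by ring end.
    apply Rmult_le_compat_l; [lra|]. apply Rmult_le_compat_r; [|exact HLn].
    apply Rmult_le_pos; lra.
Qed.

Lemma FH_sum (A A' : R -> Prop) : FH s A' -> in_unit_interval A -> in_unit_interval A' ->
  (forall a, A a -> exists a' a'' z, A' a' /\ Kset m L a'' /\ a = a' + a'' + IZR z) ->
  FH (s + b) A.
Proof.
  intros HF HA HA' Hdec eta delta He Hd.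
  assert (HC : 0 < Cst).
  { unfold Cst. pose proof (Rpower_pos q (-b)). pose proof (Rpower_pos 2 (s+b)).
    apply Rmult_lt_0_compat; [|lra]. lra. }
  destruct (HF (eta / Cst) (Rmin (delta / 2) 1)) as [l' [Hl1 [Hl2 Hl3]]].
  { apply Rdiv_lt_0_compat; lra. } { apply Rmin_pos; lra. }
  assert (Hall : forall l0, (forall p, In p l0 -> 0 < snd p - fst p <= Rmin (delta / 2) 1) ->
    exists l : list (R * R),
    (forall p', In p' l -> 0 < snd p' - fst p' <= delta) /\
    (forall a' a'' z, (exists p, In p l0 /\ fst p <= a' <= snd p) -> Kset m L a'' -> (-2 <= z <= 1)%Z ->
        exists p', In p' l /\ fst p' <= a' + a'' + IZR z <= snd p') /\
    lsum (map (fun p' => Rpower (snd p' - fst p') (s + b)) l) <=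
      Cst * lsum (map (fun p => Rpower (snd p - fst p) s) l0)).
  { induction l0 as [|p l0 IH]; intros Hp.
    - exists []. split; [intros ? []|split]. intros a' a'' z [p [[] _]]. simpl. lra.
    - destruct IH as [lr [Hr1 [Hr2 Hr3]]]. { intros p' Hp'. apply Hp. now right. }
      destruct (one_piece p delta (Hp p (or_introl eq_refl))) as [lp [Hp1 [Hp2 Hp3]]].
      exists (lp ++ lr). split; [|split].
      + intros p' Hp'. apply in_app_or in Hp'. destruct Hp'; auto.
      + intros a' a'' z [p' [[<-|Hin] Ha']] Hk Hz.
        * destruct (Hp2 a' a'' z Ha' Hk Hz) as [p'' [H1 H2]]. exists p''. split; auto. apply in_or_app; auto.
        * destruct (Hr2 a' a'' z (ex_intro _ p' (conj Hin Ha')) Hk Hz) as [p'' [H1 H2]].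
          exists p''. split; auto. apply in_or_app; auto.
      + rewrite map_app, lsum_app. simpl. fold q in Hp3. fold Cst in Hp3. lra. }
  destruct (Hall l' Hl1) as [l [H1 [H2 H3]]].
  exists l. split; [exact H1|split].
  - intros a Ha. destruct (Hdec a Ha) as [a' [a'' [z [Ha' [Ha'' Hz]]]]].
    destruct (Hl2 a' Ha') as [p [Hp1 Hp2]].
    assert (Hzr : (-2 <= z <= 1)%Z).
    { pose proof (HA a Ha). pose proof (HA' a' Ha'). destruct Ha'' as [Hk _].
      assert (IZR (-3) < IZR z < IZR 2) by (simpl; lra).
      destruct H4 as [H4a H4b]. apply lt_IZR in H4a. apply lt_IZR in H4b. lia. }
    subst a. apply H2; eauto.
  - eapply Rle_trans; [exact H3|].
    apply Rmult_le_compat_l with (r := Cst) in Hl3; [|lra].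
    replace (Cst * (eta / Cst)) with eta in Hl3 by (field; lra). exact Hl3.
Qed.
End Sum.

Lemma Rpower_ge1 x : 0 <= x -> 1 <= Rpower 2 x.
Proof. intros H. rewrite <- (Rpower_O 2) by lra. apply Rle_Rpower; lra. Qed.

Lemma Rpower_shift n k t : (k <= n)%nat ->
  Rpower 2 (INR (n - k) * t) = Rpower 2 (INR n * t) * Rpower (/ 2 ^ k) t.
Proof.
  intros Hk. rewrite minus_INR by exact Hk.
  rewrite <- (Rpower_pow k 2) by lra. rewrite <- Rpower_Ropp, Rpower_mult, <- Rpower_plus.
  f_equal. ring.
Qed.

Lemma dyadic_data (A : R -> Prop) t (l0 : list (R * R)) : 0 < t ->
  (forall p, In p l0 -> 0 < snd p - fst p <= / 4) ->
  exists D : list (nat * Z),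
    (forall d, In d D -> (1 <= fst d)%nat) /\
    (forall y, (exists p, In p l0 /\ fst p <= y <= snd p) ->
       exists d, In d D /\ (Int_part (2 ^ fst d * y) = snd d \/ Int_part (2 ^ fst d * y) = (snd d + 1)%Z)) /\
    lsum (map (fun d => Rpower (/ 2 ^ fst d) t) D) <=
      Rpower 2 t * lsum (map (fun p => Rpower (snd p - fst p) t) l0).
Proof.
  intros Ht. induction l0 as [|[al be] l0 IH]; intros Hl.
  - exists []. split; [intros ? []|split]. intros y [p [[] _]]. simpl. lra.
  - destruct IH as [D [HD1 [HD2 HD3]]]. { intros p Hp. apply Hl. now right. }
    pose proof (Hl (al, be) (or_introl eq_refl)) as Hp. simpl in Hp.
    set (ell := be - al) in *.
    destruct (choose_level (/ 2) ell ltac:(lra) ltac:(lra)) as [n [Hn1 Hn2]].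
    rewrite pow_inv in Hn1, Hn2.
    pose proof (p2_pos n) as HPn.
    assert (Hn : (1 <= n)%nat).
    { destruct n; [simpl in Hn2; lra| lia]. }
    exists ((n, Int_part (2 ^ n * al)) :: D). split; [|split].
    + intros d [<-|Hd]; auto.
    + intros y [p [[<-|Hin] Hy]].
      * exists (n, Int_part (2 ^ n * al)). split; [now left|]. simpl fst; simpl snd.
        simpl in Hy.
        assert (H2l : 2 ^ n * ell <= 1).
        { apply Rmult_le_reg_r with (/ 2 ^ n). apply Rinv_0_lt_compat; lra.
          rewrite Rmult_comm, <- Rmult_assoc, Rinv_l, Rmult_1_l, Rmult_1_l by lra. exact Hn1. }
        assert (Hy1 : 2 ^ n * al <= 2 ^ n * y <= 2 ^ n * al + 1).
        { unfold ell in *. split; nra. }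
        pose proof (Ip_spec (2 ^ n * al)). pose proof (Ip_spec (2 ^ n * y)).
        assert (Ha : IZR (Int_part (2 ^ n * al) - 1) < IZR (Int_part (2 ^ n * y))) by (rewrite minus_IZR; simpl; lra).
        assert (Hb : IZR (Int_part (2 ^ n * y)) < IZR (Int_part (2 ^ n * al) + 2)) by (rewrite plus_IZR; simpl; lra).
        apply lt_IZR in Ha. apply lt_IZR in Hb. lia.
      * destruct (HD2 y (ex_intro _ p (conj Hin Hy))) as [d [Hd1 Hd2]]. exists d. split; auto. now right.
    + simpl. fold ell.
      assert (Hw : Rpower (/ 2 ^ n) t <= Rpower 2 t * Rpower ell t).
      { rewrite Rpower_mult_distr by lra. apply Rle_Rpower_l. lra. split.
        apply Rinv_0_lt_compat; lra.
        assert (/ 2 ^ n = 2 * / 2 ^ (S n)) by (simpl; field; lra). lra. }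
      lra.
Qed.

Section Furst.
Variables (A : R -> Prop) (t : R).
Hypotheses (HAc : closed_set A) (HAu : in_unit_interval A) (HAi : times_p_invariant 2 A)
  (Ht : 0 < t) (HH : H_null t A).

Lemma furst : exists C, 1 <= C /\ forall n, exists l : list Z,
  INR (length l) <= C * Rpower 2 (INR n * t) /\ forall y, A y -> In (Int_part (2 ^ n * y)) l.
Proof.
  assert (HC : compact A).
  { apply compact_P5; auto. exists 0, 1. exact HAu. }
  pose proof (H_FH t A HC (Rlt_le _ _ Ht) HH) as HF.
  pose proof (Rpower_pos 2 t) as H2t.
  destruct (HF (/ (4 * Rpower 2 t)) (/ 4)) as [l0 [Hl1 [Hl2 Hl3]]].
  { apply Rinv_0_lt_compat. lra. } { lra. }
  destruct (dyadic_data A t l0 Ht Hl1) as [D [HD1 [HD2 HD3]]].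
  assert (HW : lsum (map (fun d => Rpower (/ 2 ^ fst d) t) D) <= / 4).
  { eapply Rle_trans; [exact HD3|].
    apply Rmult_le_compat_l with (r := Rpower 2 t) in Hl3; [|lra].
    replace (Rpower 2 t * / (4 * Rpower 2 t)) with (/ 4) in Hl3 by (field; lra). exact Hl3. }
  set (N0 := fold_right Nat.max 0%nat (map (@fst nat Z) D)).
  exists (2 * 2 ^ N0). split. { pose proof (p2_ge1 N0). lra. }
  assert (Hstrong : forall n j, (j <= n)%nat -> exists l : list Z,
    INR (length l) <= 2 * 2 ^ N0 * Rpower 2 (INR j * t) /\ forall y, A y -> In (Int_part (2 ^ j * y)) l).
  2:{ intros n. apply (Hstrong n n). lia. }
  induction n as [|n IH]; intros j Hj.
  all: destruct (le_lt_dec j N0) as [HjN|HjN].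
  1,3: (exists (map Z.of_nat (seq 0 (S (2 ^ j))));
    split;
    [ rewrite length_map, length_seq, S_INR, INR_p2;
      pose proof (Rpower_ge1 (INR j * t) ltac:(apply Rmult_le_pos; [apply pos_INR| lra]));
      pose proof (Rle_pow 2 j N0 ltac:(lra) HjN); pose proof (p2_ge1 N0);
      assert (2 ^ j + 1 <= 2 * 2 ^ N0) by lra;
      assert (0 <= 2 * 2 ^ N0) by lra;
      nra
    | intros y Hy; apply in_map_iff; exists (Z.to_nat (Int_part (2 ^ j * y)));
      pose proof (Ip_range y j (HAu y Hy)) as Hr;
      split; [lia|]; apply in_seq;
      assert (Z.to_nat (2 ^ Z.of_nat j) = 2 ^ j)%nat by (rewrite Z2Nat.inj_pow; [simpl; now rewrite Nat2Z.id| lia| lia]);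
      lia ]).
  - lia.
  -
    assert (Hk : forall d, In d D -> (fst d <= N0)%nat).
    { intros d Hd. unfold N0. apply fold_max_ge. now apply in_map. }
    set (C := 2 * 2 ^ N0) in *.
    assert (Hbuild : forall D0, (forall d, In d D0 -> In d D) -> exists l : list Z,
      INR (length l) <= lsum (map (fun d => 2 * C * Rpower 2 (INR j * t) * Rpower (/ 2 ^ fst d) t) D0) /\
      forall y, A y -> (exists d, In d D0 /\ (Int_part (2 ^ fst d * y) = snd d \/ Int_part (2 ^ fst d * y) = (snd d + 1)%Z)) ->
        In (Int_part (2 ^ j * y)) l).
    { induction D0 as [|[k c] D0 IHD]; intros HD0.
      - exists []. split. simpl; lra. intros y _ [d [[] _]].
      - destruct IHD as [lr [Hr1 Hr2]]. { intros d Hd. apply HD0. now right. }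
        assert (Hkin : In (k, c) D) by (apply HD0; now left).
        pose proof (HD1 _ Hkin) as Hk1. pose proof (Hk _ Hkin) as Hk2. simpl in Hk1, Hk2.
        destruct (IH (j - k)%nat ltac:(lia)) as [l1 [Hl1a Hl1b]].
        set (P := (2 ^ Z.of_nat (j - k))%Z).
        exists (map (fun x => P * c + x)%Z l1 ++ map (fun x => P * (c + 1) + x)%Z l1 ++ lr).
        split.
        + rewrite !length_app, !length_map, !plus_INR. simpl map. simpl lsum.
          rewrite Rpower_shift in Hl1a by lia. lra.
        + intros y Hy [d [[<-|Hd] Hc]].
          * simpl in Hc.
            assert (Hw : Int_part (2 ^ j * y) = (P * Int_part (2 ^ k * y) + Int_part (2 ^ (j - k) * frac_part (2 ^ k * y)))%Z).
            { unfold P. rewrite <- window. f_equal. f_equal. f_equal. lia. }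
            assert (Hin : In (Int_part (2 ^ (j - k) * frac_part (2 ^ k * y))) l1).
            { apply Hl1b. apply inv_iter; auto. }
            rewrite Hw. destruct Hc as [Hc|Hc]; rewrite Hc.
            -- apply in_or_app. left. apply in_map_iff. eauto.
            -- apply in_or_app. right. apply in_or_app. left. apply in_map_iff. eauto.
          * apply in_or_app. right. apply in_or_app. right. apply Hr2; eauto. }
    destruct (Hbuild D (fun d H => H)) as [l [Hl Hcov]].
    exists l. split.
    + eapply Rle_trans; [exact Hl|].
      rewrite lsum_scal.
      pose proof (Rpower_pos 2 (INR j * t)). assert (0 < C) by (unfold C; pose proof (p2_ge1 N0); lra).
      assert (0 <= 2 * C * Rpower 2 (INR j * t)) by nra.
      apply Rmult_le_compat_l with (r := 2 * C * Rpower 2 (INR j * t)) in HW; [|lra].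
      nra.
    + intros y Hy. apply Hcov; auto.
Qed.
End Furst.

Lemma sup_point m L (W : nat -> list Z) : rng m L ->
  (forall n, length (W n) = n /\ inL L (W n)) ->
  (forall n j, exists u, W (n + j)%nat = W n ++ u /\ inL L u) ->
  exists a, Kset m L a /\ forall n, val m (W n) <= a <= val m (W n) + (/ 2 ^ m) ^ n.
Proof.
  intros HR HW Happ.
  set (E := fun x => exists n, x = val m (W n)).
  assert (Hb : forall n, 0 <= val m (W n) /\ val m (W n) + (/ 2 ^ m) ^ n <= 1).
  { intros n. destruct (HW n) as [H1 H2]. pose proof (val_bounds m L (W n) HR H2) as H. rewrite H1 in H. exact H. }
  assert (Hmono : forall n n', (n' <= n)%nat -> val m (W n') <= val m (W n)).
  { intros n n' Hn. destruct (Happ n' (n - n')%nat) as [u [Hu1 Hu2]].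
    replace (n' + (n - n'))%nat with n in Hu1 by lia. rewrite Hu1, val_app.
    destruct (val_bounds m L u HR Hu2). pose proof (qn_pos m (length (W n'))). nra. }
  assert (Htail : forall n n', (n <= n')%nat -> val m (W n') <= val m (W n) + (/ 2 ^ m) ^ n).
  { intros n n' Hn. destruct (Happ n (n' - n)%nat) as [u [Hu1 Hu2]].
    replace (n + (n' - n))%nat with n' in Hu1 by lia. rewrite Hu1, val_app.
    destruct (val_bounds m L u HR Hu2). pose proof (qn_pos m (length u)).
    destruct (HW n) as [Hl _]. rewrite Hl. pose proof (qn_pos m n).
    assert (val m u <= 1) by lra. nra. }
  destruct (completeness E) as [a [Hub Hlub]].
  - exists 1. intros x [n ->]. destruct (Hb n). pose proof (qn_pos m n). lra.
  - exists (val m (W 0%nat)). now exists 0%nat.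
  - exists a.
    assert (Hs : forall n, val m (W n) <= a <= val m (W n) + (/ 2 ^ m) ^ n).
    { intros n. split.
      - apply Hub. now exists n.
      - apply Hlub. intros x [n' ->].
        destruct (Nat.le_gt_cases n' n) as [h|h].
        + pose proof (Hmono n n' h). pose proof (qn_pos m n). lra.
        + apply Htail. lia. }
    split; [split; [split|]|exact Hs].
    + destruct (Hb 0%nat). pose proof (Hs 0%nat). lra.
    + apply Hlub. intros x [n ->]. destruct (Hb n). pose proof (qn_pos m n). lra.
    + intros n. exists (W n). destruct (HW n). auto.
Qed.

Fixpoint wd (f : R -> Z) (T : R -> R) (n : nat) (y : R) : list Z :=
  match n with O => [] | S n => f y :: wd f T n (T y) end.

Lemma wd_len f T n y : length (wd f T n y) = n.
Proof. revert y; induction n; intros y; simpl; auto. Qed.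

Lemma wd_app f T n j y : wd f T (n + j) y = wd f T n y ++ wd f T j (Nat.iter n T y).
Proof.
  revert y; induction n; intros y; simpl; auto. rewrite IHn. f_equal. f_equal. f_equal.
  clear. revert y. induction n; intros y; simpl; auto. now rewrite IHn.
Qed.

Lemma zero_of_small x q : 0 < q < 1 -> (forall n, Rabs x <= 3 * q ^ n) -> x = 0.
Proof.
  intros Hq H. apply NNPP. intros Hx.
  assert (Hax : 0 < Rabs x) by (apply Rabs_pos_lt; exact Hx).
  destruct (pow_lt_1_zero q ltac:(rewrite Rabs_right; lra) (Rabs x / 3) ltac:(lra)) as [N HN].
  specialize (HN N (le_n N)). rewrite Rabs_right in HN by (apply Rle_ge, pow_le; lra).
  specialize (H N). lra.
Qed.

Section Dec.
Variables (A : R -> Prop) (k r : nat) (lk lr : list Z).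
Hypotheses (HAu : in_unit_interval A) (HAi : times_p_invariant 2 A)
  (Hlk : forall y, A y -> In (Int_part (2 ^ k * y)) lk)
  (Hlr : forall y, A y -> In (Int_part (2 ^ r * y)) lr) (Hm : (1 <= k + r)%nat).

Definition rngb (n : nat) (c : Z) : bool := andb (Z.leb 0 c) (Z.leb c (2 ^ Z.of_nat n - 1)%Z).

Definition L1 : list Z := 0%Z :: map (Z.mul (2 ^ Z.of_nat r)) (filter (rngb k) lk).
Definition L2 : list Z := 0%Z :: filter (rngb r) lr.

Let m := (k + r)%nat.
Let T y := frac_part (2 ^ m * y).
Let fb y := Int_part (2 ^ m * y).
Let fu y := (2 ^ Z.of_nat r * Int_part (2 ^ k * y))%Z.
Let fv y := Int_part (2 ^ r * frac_part (2 ^ k * y)).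

Lemma rng_L1 : rng m L1.
Proof.
  intros x [<-|Hx]. { split; [lia|]. pose proof (Z.pow_pos_nonneg 2 (Z.of_nat m)). lia. }
  apply in_map_iff in Hx. destruct Hx as [c [<- Hc]]. apply filter_In in Hc. destruct Hc as [_ Hc].
  unfold rngb in Hc. apply andb_prop in Hc. destruct Hc as [H1 H2]. apply Z.leb_le in H1, H2.
  unfold m. rewrite Nat2Z.inj_add, Z.pow_add_r by lia.
  pose proof (Z.pow_pos_nonneg 2 (Z.of_nat r)). pose proof (Z.pow_pos_nonneg 2 (Z.of_nat k)). nia.
Qed.

Lemma rng_L2 : rng m L2.
Proof.
  intros x [<-|Hx]. { split; [lia|]. pose proof (Z.pow_pos_nonneg 2 (Z.of_nat m)). lia. }
  apply filter_In in Hx. destruct Hx as [_ Hc].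
  unfold rngb in Hc. apply andb_prop in Hc. destruct Hc as [H1 H2]. apply Z.leb_le in H1, H2.
  unfold m. rewrite Nat2Z.inj_add, Z.pow_add_r by lia.
  pose proof (Z.pow_pos_nonneg 2 (Z.of_nat r)). pose proof (Z.pow_pos_nonneg 2 (Z.of_nat k)). nia.
Qed.

Lemma T_inv y : A y -> A (T y) /\ T y < 1.
Proof. intros Hy. split. apply inv_iter; auto. apply frac_bounds. Qed.

Lemma iter_inv (n : nat) (y : R) : A y -> y < 1 -> A (Nat.iter n T y) /\ Nat.iter n T y < 1.
Proof.
  induction n; intros Hy Hy1; simpl; auto. destruct (IHn Hy Hy1). now apply T_inv.
Qed.

Lemma entries (n : nat) (y : R) : A y -> y < 1 -> inL L1 (wd fu T n y) /\ inL L2 (wd fv T n y).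
Proof.
  revert y; induction n; intros y Hy Hy1; simpl.
  - split; intros x [].
  - destruct (T_inv y Hy) as [HT1 HT2]. destruct (IHn (T y) HT1 HT2) as [I1 I2].
    pose proof (HAu y Hy) as Hu.
    split.
    + intros x [<-|Hx]; [|now apply I1]. right. unfold fu. apply in_map. apply filter_In. split.
      * now apply Hlk.
      * unfold rngb. pose proof (Ip_range_frac y k) as Hr. rewrite frac_id in Hr by lra.
        apply andb_true_intro. split; apply Z.leb_le; lia.
    + intros x [<-|Hx]; [|now apply I2]. right. apply filter_In. split.
      * apply Hlr. apply inv_iter; auto.
      * unfold rngb, fv. pose proof (Ip_range_frac (2 ^ k * y) r) as Hr.
        apply andb_true_intro. split; apply Z.leb_le; lia.
Qed.

Lemma val_split (n : nat) (y : R) : val m (wd fb T n y) = val m (wd fu T n y) + val m (wd fv T n y).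
Proof.
  revert y; induction n; intros y; simpl; [lra|]. rewrite IHn.
  unfold fb, fu, fv, m. rewrite window, plus_IZR. pose proof (p2_pos (k + r)). field. lra.
Qed.

Lemma val_approx (n : nat) (y : R) : 0 <= y < 1 -> val m (wd fb T n y) <= y <= val m (wd fb T n y) + (/ 2 ^ m) ^ n.
Proof.
  revert y; induction n; intros y Hy; simpl; [lra|].
  pose proof (frac_bounds (2 ^ m * y)) as Hf.
  specialize (IHn (T y) Hf).
  pose proof (p2_pos m) as HP.
  assert (E : 2 ^ m * y = IZR (fb y) + T y) by (unfold fb, T, frac_part; ring).
  split.
  - apply Rmult_le_reg_l with (2 ^ m); [lra|].
    replace (2 ^ m * ((IZR (fb y) + val m (wd fb T n (T y))) / 2 ^ m)) with (IZR (fb y) + val m (wd fb T n (T y))) by (field; lra).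
    lra.
  - apply Rmult_le_reg_l with (2 ^ m); [lra|].
    replace (2 ^ m * ((IZR (fb y) + val m (wd fb T n (T y))) / 2 ^ m + / 2 ^ m * (/ 2 ^ m) ^ n))
      with (IZR (fb y) + val m (wd fb T n (T y)) + (/ 2 ^ m) ^ n) by (field; lra).
    lra.
Qed.

Lemma decomp a : A a -> a < 1 -> exists a' a'', Kset m L1 a' /\ Kset m L2 a'' /\ a = a' + a''.
Proof.
  intros Ha Ha1. pose proof (HAu a Ha) as Hau.
  destruct (sup_point m L1 (fun n => wd fu T n a) rng_L1) as [a' [Ka' Ha']].
  { intros n. split. apply wd_len. now apply (entries n a). }
  { intros n j. exists (wd fu T j (Nat.iter n T a)). split. apply wd_app.
    destruct (iter_inv n a Ha Ha1). now apply (entries j). }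
  destruct (sup_point m L2 (fun n => wd fv T n a) rng_L2) as [a'' [Ka'' Ha'']].
  { intros n. split. apply wd_len. now apply (entries n a). }
  { intros n j. exists (wd fv T j (Nat.iter n T a)). split. apply wd_app.
    destruct (iter_inv n a Ha Ha1). now apply (entries j). }
  exists a', a''. split; [auto|split; [auto|]].
  assert (Hq : 0 < / 2 ^ m < 1). { split. apply q_pos. apply q_lt1. exact Hm. }
  assert (a - a' - a'' = 0); [|lra].
  apply (zero_of_small _ (/ 2 ^ m) Hq). intros n.
  pose proof (val_approx n a ltac:(lra)). rewrite val_split in H.
  specialize (Ha' n). specialize (Ha'' n). simpl in Ha', Ha''.
  pose proof (qn_pos m n). apply Rabs_le. lra.
Qed.
End Dec.

Lemma hdim_nonneg E d : is_hdim E d -> 0 <= d.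
Proof. intros [_ H]. apply H. intros; auto. Qed.

Lemma q_Rpower m : / 2 ^ m = Rpower 2 (- INR m).
Proof. rewrite Rpower_Ropp, Rpower_pow by lra. reflexivity. Qed.

Lemma size_bound m (L : list Z) c sg : INR (length L) <= Rpower 2 c -> c < INR m * sg ->
  INR (length L) * Rpower (/ 2 ^ m) sg < 1.
Proof.
  intros H1 H2. rewrite q_Rpower, Rpower_mult.
  apply Rle_lt_trans with (Rpower 2 c * Rpower 2 (- INR m * sg)).
  - apply Rmult_le_compat_r; [left; apply Rpower_pos| exact H1].
  - rewrite <- Rpower_plus. rewrite <- (Rpower_O 2) by lra. apply Rpower_lt; lra.
Qed.

Lemma size_bound2 m (L : list Z) c b : INR (length L) <= Rpower 2 c -> c < INR m * b ->
  INR (length L) <= Rpower (/ 2 ^ m) (- b).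
Proof.
  intros H1 H2. rewrite q_Rpower, Rpower_mult. eapply Rle_trans; [exact H1|].
  apply Rle_Rpower; lra.
Qed.

Lemma log2_spec x : 0 < x -> Rpower 2 (ln x / ln 2) = x.
Proof. intros Hx. apply (Rpower_Rlog 2 x); lra. Qed.

Lemma len_filter {A} (f : A -> bool) l : (length (filter f l) <= length l)%nat.
Proof. induction l; simpl; auto. destruct (f a); simpl; lia. Qed.

Theorem lemma11p1 (A2 : R -> Prop) (s s' : R) :
  closed_set A2 -> in_unit_interval A2 -> times_p_invariant 2 A2 ->
  is_hdim A2 s -> 0 < s <= 1 -> 0 <= s' < s ->
  forall eps, 0 < eps ->
  exists (m : nat) (A2' A2'' : R -> Prop) (d' d'' : R),
    (1 <= m)%nat /\
    closed_set A2' /\ in_unit_interval A2' /\ times_p_invariant (2 ^ m) A2' /\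
    closed_set A2'' /\ in_unit_interval A2'' /\ times_p_invariant (2 ^ m) A2'' /\
    is_hdim A2' d' /\ is_hdim A2'' d'' /\
    subset_sum_mod1 A2 A2' A2'' /\
    Rabs (d' - s') <= eps /\
    s >= d' + d'' - eps.
Proof.
  intros HAc HAu HAi Hdim Hs Hs' eps Heps.
  set (t := s + eps / 4).
  assert (Ht : 0 < t) by (unfold t; lra).
  assert (HHt : H_null t A2) by (apply (hdim_H A2 s); [exact Hdim| unfold t; lra]).
  destruct (furst A2 t HAc HAu HAi Ht HHt) as [C [HC1 HCn]].
  set (c0 := ln (2 * C) / ln 2).
  assert (Hc0 : Rpower 2 c0 = 2 * C) by (apply log2_spec; lra).
  assert (Hc0pos : 1 <= c0).
  { unfold c0. pose proof ln_lt_2. apply Rmult_le_reg_r with (ln 2); [lra|].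
    unfold Rdiv. rewrite Rmult_assoc, Rinv_l, Rmult_1_r, Rmult_1_l by lra.
    destruct (Req_dec C 1) as [->|HC]. right. f_equal. ring.
    left. apply ln_increasing; lra. }
  set (X := 4 * (2 * c0 + 1) / eps).
  assert (HX : 0 < X) by (unfold X; apply Rdiv_lt_0_compat; lra).
  set (m := S (Z.to_nat (up X))).
  assert (HmX : X < INR m).
  { unfold m. rewrite S_INR, INR_IZR_INZ, Z2Nat.id.
    - destruct (archimed X). lra.
    - destruct (archimed X). apply le_IZR. simpl. lra. }
  assert (Hm1 : (1 <= m)%nat) by (unfold m; lia).
  assert (HmR : 1 <= INR m) by (apply (le_INR 1); exact Hm1).
  set (k := Z.to_nat (Int_part (INR m * s' / s))).
  assert (Hkr : INR k <= INR m * s' / s < INR k + 1).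
  { pose proof (Ip_spec (INR m * s' / s)) as Hip.
    assert (0 <= INR m * s' / s) by (apply Rmult_le_pos; [apply Rmult_le_pos; lra| left; apply Rinv_0_lt_compat; lra]).
    assert (Hnn : (0 <= Int_part (INR m * s' / s))%Z).
    { assert (H0 : IZR (-1) < IZR (Int_part (INR m * s' / s))) by lra. apply lt_IZR in H0. lia. }
    unfold k. rewrite INR_IZR_INZ, Z2Nat.id by exact Hnn. lra. }
  assert (Hkm : (k < m)%nat).
  { apply INR_lt. assert (INR m * s' / s < INR m).
    { apply Rmult_lt_reg_r with s; [lra|]. unfold Rdiv. rewrite Rmult_assoc, Rinv_l, Rmult_1_r by lra. nra. }
    lra. }
  set (r := (m - k)%nat).
  assert (Hmkr : m = (k + r)%nat) by (unfold r; lia).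
  destruct (HCn k) as [lk [Hlk1 Hlk2]].
  destruct (HCn r) as [lr [Hlr1 Hlr2]].
  set (L1' := L1 k r lk). set (L2' := L2 r lr).
  assert (HM : INR (k + r) = INR m) by (now rewrite <- Hmkr).
  assert (HKR : INR k + INR r = INR m) by (rewrite <- plus_INR; now rewrite <- Hmkr).
  assert (Hm1' : (1 <= k + r)%nat) by lia.
  assert (Hk0 : 0 <= INR k) by apply pos_INR.
  assert (Hr0 : 0 <= INR r) by apply pos_INR.
  assert (HL1 : INR (length L1') <= Rpower 2 (c0 + INR k * t)).
  { unfold L1', L1. cbn [length]. rewrite length_map, S_INR.
    pose proof (len_filter (rngb k) lk) as Hf. apply le_INR in Hf.
    rewrite Rpower_plus, Hc0. pose proof (Rpower_ge1 (INR k * t) ltac:(nra)). nra. }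
  assert (HL2 : INR (length L2') <= Rpower 2 (c0 + INR r * t)).
  { unfold L2', L2. cbn [length]. rewrite S_INR.
    pose proof (len_filter (rngb r) lr) as Hf. apply le_INR in Hf.
    rewrite Rpower_plus, Hc0. pose proof (Rpower_ge1 (INR r * t) ltac:(nra)). nra. }
  assert (HRL1 : rng (k + r) L1') by apply rng_L1, Hm1'.
  assert (HRL2 : rng (k + r) L2') by apply rng_L2, Hm1'.
  assert (H0L1 : In 0%Z L1') by now left.
  assert (H0L2 : In 0%Z L2') by now left.
  set (c1 := c0 + INR k * t). set (c2 := c0 + INR r * t).
  assert (Hc1 : 0 < c1) by (unfold c1; nra).
  assert (Hc2 : 0 < c2) by (unfold c2; nra).
  assert (HmP : 0 < INR m) by lra.
  assert (HK : forall c L, rng (k + r) L -> INR (length L) <= Rpower 2 c -> 0 < c ->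
             forall sg, c / INR m < sg -> H_null sg (Kset (k + r) L)).
  { intros c L HR HLc Hc sg Hsg.
    assert (Hcm : c < INR m * sg).
    { apply Rmult_lt_compat_l with (r := INR m) in Hsg; [|lra].
      replace (INR m * (c / INR m)) with c in Hsg by (field; lra). exact Hsg. }
    assert (0 < sg) by (assert (0 < c / INR m) by (apply Rdiv_lt_0_compat; lra); lra).
    apply FH_H; auto. apply K_FH; auto. apply size_bound with c; auto. rewrite HM. exact Hcm. }
  destruct (hdim_exists (Kset (k + r) L1')) as [d1 Hd1].
  { exists (c1 / INR m + 1). split. assert (0 < c1 / INR m) by (apply Rdiv_lt_0_compat; lra). lra.
    apply (HK c1); auto. lra. }
  destruct (hdim_exists (Kset (k + r) L2')) as [d2 Hd2].
  { exists (c2 / INR m + 1). split. assert (0 < c2 / INR m) by (apply Rdiv_lt_0_compat; lra). lra.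
    apply (HK c2); auto. lra. }
  assert (Hd1u : d1 <= c1 / INR m).
  { apply (hdim_upper _ _ _ Hd1). left; apply Rdiv_lt_0_compat; lra. apply (HK c1); auto. }
  assert (Hd2u : d2 <= c2 / INR m).
  { apply (hdim_upper _ _ _ Hd2). left; apply Rdiv_lt_0_compat; lra. apply (HK c2); auto. }
  pose proof (hdim_nonneg _ _ Hd1) as Hd1n. pose proof (hdim_nonneg _ _ Hd2) as Hd2n.
  assert (Hsub : forall a, A2 a -> exists a' a'' (z : Z), Kset (k + r) L1' a' /\ Kset (k + r) L2' a'' /\ a = a' + a'' + IZR z).
  { intros a Ha. destruct (Rlt_or_le a 1) as [h|h].
    - destruct (decomp A2 k r lk lr HAu HAi Hlk2 Hlr2 Hm1' a Ha h) as [a' [a'' [H1 [H2 H3]]]].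
      exists a', a'', 0%Z. split; auto. split; auto. rewrite H3. simpl. ring.
    - exists 0, 0, 1%Z. split; [apply K_zero; auto|split; [apply K_zero; auto|]].
      pose proof (HAu a Ha). simpl. lra. }
  assert (Hlow : s <= d1 + c2 / INR m).
  { apply NNPP. intros Hn. apply Rnot_le_lt in Hn.
    set (de := (s - d1 - c2 / INR m) / 4).
    assert (Hde : 0 < de) by (unfold de; lra).
    set (sg := d1 + de). set (b := c2 / INR m + de).
    assert (HHs : H_null sg (Kset (k + r) L1')) by (apply (hdim_H _ d1); auto; unfold sg; lra).
    assert (HCK : compact (Kset (k + r) L1')).
    { apply compact_P5. apply K_closed. exists 0, 1. apply K_unit. }
    assert (HFs : FH sg (Kset (k + r) L1')) by (apply H_FH; auto; unfold sg; lra).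
    assert (Hb : c2 < INR (k + r) * b).
    { rewrite HM. unfold b. replace (INR m * (c2 / INR m + de)) with (c2 + INR m * de) by (field; lra). nra. }
    pose proof (FH_sum (k + r) L2' sg b Hm1' ltac:(unfold sg; lra) ltac:(unfold b; assert (0 < c2 / INR m) by (apply Rdiv_lt_0_compat; lra); lra)
       (size_bound2 _ _ _ _ HL2 Hb) A2 (Kset (k + r) L1') HFs HAu (K_unit _ _) Hsub) as HFA.
    apply FH_H in HFA; [| unfold sg, b; assert (0 < c2 / INR m) by (apply Rdiv_lt_0_compat; lra); lra].
    destruct Hdim as [Hdim1 _]. pose proof (Hdim1 (sg + b) ltac:(unfold sg, b; assert (0 < c2 / INR m) by (apply Rdiv_lt_0_compat; lra); lra) HFA).
    unfold sg, b, de in H. lra. }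
  exists (k + r)%nat, (Kset (k + r) L1'), (Kset (k + r) L2'), d1, d2.
  split; [exact Hm1'|].
  split; [apply K_closed|]. split; [apply K_unit|]. split; [apply K_inv; auto|].
  split; [apply K_closed|]. split; [apply K_unit|]. split; [apply K_inv; auto|].
  split; [exact Hd1|]. split; [exact Hd2|]. split; [exact Hsub|].
  assert (HmX' : 4 * (2 * c0 + 1) < INR m * eps).
  { unfold X in HmX. apply Rmult_lt_compat_r with (r := eps) in HmX; [|lra].
    replace (4 * (2 * c0 + 1) / eps * eps) with (4 * (2 * c0 + 1)) in HmX by (field; lra). exact HmX. }
  assert (E1 : INR m * d1 <= c1).
  { apply Rmult_le_compat_l with (r := INR m) in Hd1u; [|lra].
    replace (INR m * (c1 / INR m)) with c1 in Hd1u by (field; lra). exact Hd1u. }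
  assert (E2 : INR m * d2 <= c2).
  { apply Rmult_le_compat_l with (r := INR m) in Hd2u; [|lra].
    replace (INR m * (c2 / INR m)) with c2 in Hd2u by (field; lra). exact Hd2u. }
  assert (E3 : INR m * s <= INR m * d1 + c2).
  { apply Rmult_le_compat_l with (r := INR m) in Hlow; [|lra].
    replace (INR m * (d1 + c2 / INR m)) with (INR m * d1 + c2) in Hlow by (field; lra). exact Hlow. }
  assert (E4 : INR k * s <= INR m * s' < INR k * s + s).
  { destruct Hkr as [Hk1 Hk2].
    apply Rmult_le_compat_r with (r := s) in Hk1; [|lra].
    apply Rmult_lt_compat_r with (r := s) in Hk2; [|lra].
    replace (INR m * s' / s * s) with (INR m * s') in Hk1, Hk2 by (field; lra). lra. }
  assert (Ekm : INR k * eps <= INR m * eps) by (apply Rmult_le_compat_r; lra).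
  assert (Erm : INR r * eps <= INR m * eps) by (apply Rmult_le_compat_r; lra).
  unfold c1, c2, t in *.
  split.
  - apply Rabs_le. split.
    + apply Rmult_le_reg_l with (INR m); [lra|]. nra.
    + apply Rmult_le_reg_l with (INR m); [lra|]. nra.
  - apply Rle_ge. apply Rmult_le_reg_l with (INR m); [lra|]. nra.
Qed.
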